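(* Let $p,q$ be positive integers, let $e\in\mathbb{R}^p$ be the vector of all ones, and let $$L:=\{(x,u)\in\mathbb{R}^p\times\mathbb{R}^q : x\ge \|u\|e\}$$ (componentwise order). Let $x,y\in\mathbb{R}^p$ and $u,v\in\mathbb{R}^q\setminus\{0\}$. Then $((x,u),(y,v))\in C(L)$ if and only if there exists $\lambda>0$ such that $v=-\lambda u$, $\langle y,e\rangle=\|v\|$, and $(x-\|u\|e,\,y)\in C(\mathbb{R}^p_+)$, i.e. $x-\|u\|e\ge 0$, $y\ge 0$ and $\langle x-\|u\|e,y\rangle=0$.
   Context: For a proper cone $K\subset\mathbb{R}^\ell$, its dual cone is $K^*:=\{x\in\mathbb{R}^\ell:\langle x,y\rangle\ge0\ \forall y\in K\}$, and its complementarity set is $C(K):=\{(x,y)\in K\times K^*: \langle x,y\rangle=0\}$. Elements of $\mathbb{R}^p\times\mathbb{R}^q$ are identified with vectors of $\mathbb{R}^{p+q}$, with inner product $\langle (x,u),(y,v)\rangle=\langle x,y\rangle+\langle u,v\rangle$. The inequality $\ge$ between vectors is componentwise; $\mathbb{R}^p_+=\{x\in\mathbb{R}^p:x\ge0\}$ (which is self-dual). The cone $L$ is a proper cone, and its dual is $L^*=M:=\{(y,v)\in\mathbb{R}^p\times\mathbb{R}^q:\langle y,e\rangle\ge\|v\|,\ y\ge0\}$. *)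

(* Defs.v *)
From HB Require Import structures.
From mathcomp Require Import all_boot all_order all_algebra.
Set Implicit Arguments. Unset Strict Implicit. Unset Printing Implicit Defensive.
Import Order.TTheory GRing.Theory Num.Theory.
Local Open Scope ring_scope.

Section Defs.
Variable R : rcfType.

Definition dotv (n : nat) (x y : 'rV[R]_n) : R := \sum_(i < n) x 0 i * y 0 i.

Definition normv (n : nat) (u : 'rV[R]_n) : R := Num.sqrt (dotv u u).

Definition onesv (n : nat) : 'rV[R]_n := const_mx 1.

Definition nonneg (n : nat) (x : 'rV[R]_n) : Prop := forall i, 0 <= x 0 i.

Definition orthant (n : nat) : 'rV[R]_n -> Prop := fun x => nonneg x.

Definition dotpair (p q : nat) (a b : 'rV[R]_p * 'rV[R]_q) : R :=
  dotv a.1 b.1 + dotv a.2 b.2.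

Definition dual_cone (V : Type) (ip : V -> V -> R) (K : V -> Prop) : V -> Prop :=
  fun y => forall x, K x -> 0 <= ip x y.

Definition compl_set (V : Type) (ip : V -> V -> R) (K : V -> Prop) : V * V -> Prop :=
  fun xy => K xy.1 /\ dual_cone ip K xy.2 /\ ip xy.1 xy.2 = 0.

Definition Lcone (p q : nat) : 'rV[R]_p * 'rV[R]_q -> Prop :=
  fun a => nonneg (a.1 - normv a.2 *: onesv p).

End Defs.

(* Main.v *)
Require Import Defs.
From HB Require Import structures.
From mathcomp Require Import all_boot all_order all_algebra.
From mathcomp Require Import ring lra.
Import Order.TTheory GRing.Theory Num.Theory.
Set Implicit Arguments. Unset Strict Implicit. Unset Printing Implicit Defensive.
Local Open Scope ring_scope.

Section Aux.
Variable R : rcfType.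
Variable n : nat.
Implicit Types x y z : 'rV[R]_n.

Lemma dotvC x y : dotv x y = dotv y x.
Proof. by apply: eq_bigr => i _; rewrite mulrC. Qed.

Lemma dotvDl x y z : dotv (x + y) z = dotv x z + dotv y z.
Proof. by rewrite /dotv -big_split; apply: eq_bigr => i _; rewrite mxE mulrDl. Qed.

Lemma dotvZl (a : R) x y : dotv (a *: x) y = a * dotv x y.
Proof. by rewrite /dotv mulr_sumr; apply: eq_bigr => i _; rewrite mxE mulrA. Qed.

Lemma dotvDr x y z : dotv z (x + y) = dotv z x + dotv z y.
Proof. by rewrite dotvC dotvDl !(dotvC z). Qed.

Lemma dotvZr (a : R) x y : dotv y (a *: x) = a * dotv y x.
Proof. by rewrite dotvC dotvZl dotvC. Qed.

Lemma dotvNl x y : dotv (- x) y = - dotv x y.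
Proof. by rewrite -scaleN1r dotvZl mulN1r. Qed.

Lemma dotv0l y : dotv 0 y = 0.
Proof. by rewrite -(scale0r (0 : 'rV[R]_n)) dotvZl mul0r. Qed.

Lemma dotv_ge0 x : 0 <= dotv x x.
Proof. by apply: sumr_ge0 => i _; rewrite -expr2 sqr_ge0. Qed.

Lemma dotv_eq0 x : dotv x x = 0 -> x = 0.
Proof.
move=> /eqP; rewrite psumr_eq0; last by move=> i _; rewrite -expr2 sqr_ge0.
move=> /allP H; apply/rowP => i; rewrite mxE.
by have := H i (mem_index_enum _); rewrite /= mulf_eq0 orbb => /eqP.
Qed.

Lemma normv_ge0 x : 0 <= normv x.
Proof. exact: sqrtr_ge0. Qed.

Lemma normv2 x : dotv x x = normv x ^+ 2.
Proof. by rewrite /normv sqr_sqrtr // dotv_ge0. Qed.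

Lemma normv_eq0 x : normv x = 0 -> x = 0.
Proof. by move=> H; apply: dotv_eq0; rewrite normv2 H expr0n. Qed.

Lemma normvZ (a : R) x : normv (a *: x) = `|a| * normv x.
Proof.
by rewrite /normv dotvZl dotvZr mulrA -expr2 sqrtrM ?sqr_ge0 // sqrtr_sqr.
Qed.

Lemma normvN x : normv (- x) = normv x.
Proof. by rewrite -scaleN1r normvZ normrN1 mul1r. Qed.

Lemma normv0 : normv (0 : 'rV[R]_n) = 0.
Proof. by rewrite /normv dotv0l sqrtr0. Qed.

Lemma sq_expand (a b : R) x y :
  dotv (a *: x + b *: y) (a *: x + b *: y) =
  a ^+ 2 * dotv x x + 2 * a * b * dotv x y + b ^+ 2 * dotv y y.
Proof.
rewrite !dotvDl !dotvDr !dotvZl !dotvZr (dotvC y x); ring.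
Qed.

Lemma key x y :
  dotv (normv y *: x + normv x *: y) (normv y *: x + normv x *: y) =
  2 * normv x * normv y * (normv x * normv y + dotv x y).
Proof. rewrite sq_expand !normv2; ring. Qed.

Lemma cs_aux x y : 0 <= normv x * normv y + dotv x y.
Proof.
have [->|hx] := eqVneq x 0; first by rewrite normv0 dotv0l mul0r addr0.
have [->|hy] := eqVneq y 0; first by rewrite normv0 dotvC dotv0l mulr0 addr0.
have px : 0 < normv x.
  by rewrite lt_def normv_ge0 andbT; apply/eqP => /normv_eq0; apply/eqP.
have py : 0 < normv y.
  by rewrite lt_def normv_ge0 andbT; apply/eqP => /normv_eq0; apply/eqP.
have := dotv_ge0 (normv y *: x + normv x *: y); rewrite key => H.
by move: H; rewrite pmulr_rge0 // !mulr_gt0.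
Qed.

Lemma nonneg_dot x y : nonneg x -> nonneg y -> 0 <= dotv x y.
Proof. by move=> hx hy; apply: sumr_ge0 => i _; apply: mulr_ge0. Qed.

Lemma dot_delta (i : 'I_n) y : dotv (delta_mx 0 i) y = y 0 i.
Proof.
rewrite /dotv (bigD1 i) //= big1 ?addr0; first by rewrite mxE !eqxx mul1r.
by move=> j hj; rewrite mxE eqxx /= (negbTE hj) mul0r.
Qed.

Lemma nonneg_delta (i : 'I_n) : nonneg (delta_mx 0 i : 'rV[R]_n).
Proof. by move=> j; rewrite mxE ler0n. Qed.

End Aux.

Theorem proposition1 (R : rcfType) (p q : nat) (hp : (0 < p)%N) (hq : (0 < q)%N)
    (x y : 'rV[R]_p) (u v : 'rV[R]_q) (hu : u != 0) (hv : v != 0) :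
  compl_set (@dotpair R p q) (@Lcone R p q) ((x, u), (y, v)) <->
  exists lambda : R, 0 < lambda /\ v = - (lambda *: u) /\
    dotv y (onesv R p) = normv v /\
    compl_set (@dotv R p) (@orthant R p) (x - normv u *: onesv R p, y).
Proof.
have pu : 0 < normv u.
  by rewrite lt_def normv_ge0 andbT; apply/eqP => /normv_eq0; apply/eqP.
have pv : 0 < normv v.
  by rewrite lt_def normv_ge0 andbT; apply/eqP => /normv_eq0; apply/eqP.
set e := onesv R p.
have xE : x = (x - normv u *: e) + normv u *: e by rewrite subrK.
split.
- rewrite /compl_set /dual_cone /dotpair /Lcone /=.
  move=> [hL [hD h0]].
  have ypos : nonneg y.
    move=> i; have := hD (delta_mx 0 i, 0).
    rewrite /= normv0 scale0r subr0 dotv0l addr0 dot_delta; apply.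
    exact: nonneg_delta.
  have hye : normv v <= dotv e y.
    have := hD (normv v *: e, - v); rewrite /= normvN subrr.
    have Hz : nonneg (0 : 'rV[R]_p) by move=> i; rewrite mxE.
    move=> /(_ Hz); rewrite dotvZl dotvNl normv2 => H; nra.
  have h1 := nonneg_dot hL ypos.
  have h2 := cs_aux u v.
  move: h0; rewrite {1}xE dotvDl dotvZl => h0.
  have ha : dotv (x - normv u *: e) y = 0 by nra.
  have hb : dotv e y = normv v by nra.
  have hc : normv u * normv v + dotv u v = 0 by nra.
  exists (normv v / normv u); split; first by apply: divr_gt0.
  split.
    have := key u v; rewrite hc mulr0 => /dotv_eq0 /eqP.
    rewrite addrC addr_eq0 => /eqP H.
    by rewrite -[LHS](scalerK (lt0r_neq0 pu)) H scalerN scalerA mulrC.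
  split; first by rewrite dotvC.
  split; first exact: hL.
  split=> //; move=> z hz; exact: nonneg_dot.
- move=> [l [hl [hvE [hye [hL [hD h0]]]]]].
  rewrite /= in hL hD h0.
  have ypos : nonneg y.
    move=> i; have := hD (delta_mx 0 i); rewrite dot_delta; apply.
    exact: nonneg_delta.
  have nv : normv v = l * normv u by rewrite hvE normvN normvZ gtr0_norm.
  rewrite dotvC in hye.
  split; first exact: hL.
  split.
    move=> [x' u'] /= hx'.
    rewrite /dotpair /=.
    have -> : x' = (x' - normv u' *: e) + normv u' *: e by rewrite subrK.
    rewrite dotvDl dotvZl hye.
    have := nonneg_dot hx' ypos; have := cs_aux u' v; nra.
  rewrite /dotpair /= {1}xE dotvDl dotvZl h0 hye hvE.
  rewrite dotvC dotvNl dotvZl normv2 -hvE nv; ring.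
Qed.
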